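(* Let $K,H$ be finite dimensional Hilbert spaces, $A\in B(K\otimes H)$ self-adjoint, and $y=\sum_{i=1}^k x_i\otimes y_i$ with $x_i\in K$, $y_i\in H$. Let $X=\mathrm{span}(x_1,\dots,x_k)$ and $Y=\mathrm{span}(y_1,\dots,y_k)$. Suppose $(Ay,y)=1$ and $Ay\notin X\otimes Y$. Then there exist a unit product vector $x=u\otimes v$ ($u\in K$, $v\in H$) with $x\perp X\otimes Y$ and $s\in(0,1)$ such that, with $t=(1-s^2)^{1/2}$, $$\big(A(sx+ty),\,sx+ty\big)>1.$$ *)

(* Defs.v *)
From HB Require Import structures.
From mathcomp Require Import all_boot all_order all_algebra.
Set Implicit Arguments. Unset Strict Implicit. Unset Printing Implicit Defensive.
Import Order.TTheory GRing.Theory Num.Theory.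
Local Open Scope ring_scope.

(* K = C^m (column vectors), H = C^n, and K (x) H is modelled as the
   m x n matrices, with the elementary tensor u (x) v := u *m v^T,
   i.e. (u (x) v)_{ij} = u_i v_j. *)

Definition tens (C : numClosedFieldType) (m n : nat)
  (u : 'cV[C]_m) (v : 'cV[C]_n) : 'M[C]_(m, n) := u *m v^T.

Definition dotT (C : numClosedFieldType) (m n : nat) (X Y : 'M[C]_(m, n)) : C :=
  \sum_(i < m) \sum_(j < n) X i j * (Y i j)^*.

Definition selfadj (C : numClosedFieldType) (m n : nat)
  (A : 'M[C]_(m, n) -> 'M[C]_(m, n)) : Prop :=
  forall X Y, dotT (A X) Y = dotT X (A Y).

Definition tens_span (C : numClosedFieldType) (m n k : nat)
  (xs : 'I_k -> 'cV[C]_m) (ys : 'I_k -> 'cV[C]_n) : {vspace 'M[C]_(m, n)} :=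
  <<[seq tens (xs i) (ys j) | i <- enum 'I_k, j <- enum 'I_k]>>%VS.

(* Main.v *)
Require Import Defs.
From HB Require Import structures.
From mathcomp Require Import all_boot all_order all_algebra.
From mathcomp Require Import ring.
From Stdlib Require Import Classical.
Import Order.TTheory GRing.Theory Num.Theory.
Local Open Scope ring_scope.

Section Dot.
Variables (C : numClosedFieldType) (m n : nat).
Implicit Types (X Y Z : 'M[C]_(m, n)).

Lemma dotTDl X Y Z : dotT (X + Y) Z = dotT X Z + dotT Y Z.
Proof.
rewrite /dotT -big_split; apply: eq_bigr => i _.
rewrite -big_split; apply: eq_bigr => j _; by rewrite !mxE mulrDl.
Qed.

Lemma dotTZl a X Y : dotT (a *: X) Y = a * dotT X Y.
Proof.
rewrite /dotT mulr_sumr; apply: eq_bigr => i _.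
rewrite mulr_sumr; apply: eq_bigr => j _; by rewrite !mxE mulrA.
Qed.

Lemma dotTC X Y : dotT Y X = (dotT X Y)^*.
Proof.
rewrite /dotT rmorph_sum; apply: eq_bigr => i _.
rewrite rmorph_sum; apply: eq_bigr => j _; by rewrite rmorphM /= conjCK mulrC.
Qed.


Lemma dotTDr X Y Z : dotT X (Y + Z) = dotT X Y + dotT X Z.
Proof. by rewrite dotTC dotTDl rmorphD /= -!dotTC. Qed.

Lemma dotTZr a X Y : dotT X (a *: Y) = a^* * dotT X Y.
Proof. by rewrite dotTC dotTZl rmorphM /= -dotTC. Qed.

Lemma dotT0l X : dotT 0 X = 0.
Proof. by rewrite -(scale0r 0) dotTZl mul0r. Qed.

Lemma dotT0r X : dotT X 0 = 0.
Proof. by rewrite dotTC dotT0l rmorph0. Qed.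

Lemma dotTsumr I (r : seq I) (F : I -> 'M[C]_(m, n)) X :
  dotT X (\sum_(i <- r) F i) = \sum_(i <- r) dotT X (F i).
Proof. exact: (big_morph (dotT X) (dotTDr X) (dotT0r X)). Qed.

Lemma dotT_ge0 X : 0 <= dotT X X.
Proof. by apply: sumr_ge0 => i _; apply: sumr_ge0 => j _; apply: mul_conjC_ge0. Qed.

Lemma dotT_eq0 X : dotT X X = 0 -> X = 0.
Proof.
move=> h; apply/matrixP => i j; rewrite mxE.
have hi := psumr_eq0P (fun i _ => sumr_ge0 _ (fun j _ => mul_conjC_ge0 (X i j))) h.
have := psumr_eq0P (fun j _ => mul_conjC_ge0 (X i j)) (hi i isT) (i := j) isT.
by move/eqP; rewrite mul_conjC_eq0 => /eqP.
Qed.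

Lemma dotT_tens (u x : 'cV[C]_m) (v y : 'cV[C]_n) :
  dotT (tens u v) (tens x y) =
  (\sum_a u a 0 * (x a 0)^*) * (\sum_b v b 0 * (y b 0)^*).
Proof.
rewrite /dotT /tens mulr_suml; apply: eq_bigr => a _.
rewrite mulr_sumr; apply: eq_bigr => b _.
rewrite !mxE !big_ord1 !mxE rmorphM; ring.
Qed.

End Dot.

Lemma orth_span (C : numClosedFieldType) (m n k : nat)
  (xs : 'I_k -> 'cV[C]_m) (ys : 'I_k -> 'cV[C]_n) (x : 'M[C]_(m, n)) :
  (forall i j, dotT x (tens (xs i) (ys j)) = 0) ->
  forall z, z \in tens_span xs ys -> dotT x z = 0.
Proof.
move=> h z; rewrite /tens_span.
set s := [seq _ | _ <- _, _ <- _] => hz.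
have := @coord_span _ _ _ (in_tuple s) z hz => ->.
rewrite dotTsumr big1 // => i _.
rewrite dotTZr.
have : (in_tuple s)`_i \in s by exact: mem_nth _ (ltn_ord i).
case/allpairsP => [[a b] [_ _ ->]] /=.
by rewrite h mulr0.
Qed.

Lemma sum_delta (C : nzRingType) n (F : 'I_n -> C) j :
  \sum_b F b * (b == j)%:R = F j.
Proof.
rewrite (bigD1 j) //= eqxx mulr1 big1 ?addr0 // => b /negbTE ->; by rewrite mulr0.
Qed.

Lemma tens_span_mx (C : numClosedFieldType) (m n k : nat)
  (xs : 'I_k -> 'cV[C]_m) (ys : 'I_k -> 'cV[C]_n) (c : 'M[C]_k) :
  (\matrix_(a, i) xs i a 0) *m c *m (\matrix_(b, j) ys j b 0)^T \in tens_span xs ys.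
Proof.
have -> : (\matrix_(a, i) xs i a 0) *m c *m (\matrix_(b, j) ys j b 0)^T =
   \sum_i \sum_j c i j *: tens (xs i) (ys j).
  apply/matrixP => a b; rewrite !mxE summxE.
  under eq_bigr do rewrite !mxE mulr_suml.
  rewrite exchange_big /=; apply: eq_bigr => i _.
  rewrite summxE; apply: eq_bigr => j _.
  by rewrite !mxE big_ord1 !mxE; ring.
apply: memv_suml => i _; apply: memv_suml => j _; apply: memvZ.
apply: memv_span; apply: allpairs_f; exact: mem_enum.
Qed.

Lemma mx_neq0 (C : numClosedFieldType) p q (M : 'M[C]_(p, q)) :
  M != 0 -> exists i j, M i j != 0.
Proof.
move=> hM; apply: NNPP => H; move/eqP: hM; apply; apply/matrixP => i j.
rewrite mxE; apply/eqP; apply/negPn/negP => hn; apply: H; by exists i, j.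
Qed.

Arguments mx_neq0 {C p q M}.

Lemma exists_prod (C : numClosedFieldType) (m n k : nat)
  (xs : 'I_k -> 'cV[C]_m) (ys : 'I_k -> 'cV[C]_n) (w : 'M[C]_(m, n)) :
  w \notin tens_span xs ys ->
  exists u v, (forall i j, dotT (tens u v) (tens (xs i) (ys j)) = 0) /\
              dotT w (tens u v) != 0.
Proof.
move=> hw.
set Xc : 'M[C]_(m, k) := \matrix_(a, i) xs i a 0.
set Yc : 'M[C]_(n, k) := \matrix_(b, j) ys j b 0.
set Q := (cokermx Xc^T)^T.
set Q' := (cokermx Yc^T)^T.
have hQ : Q *m Xc = 0.
  by rewrite /Q -[Xc in _ *m Xc]trmxK -trmx_mul mulmx_coker trmx0.
have hQ' : Q' *m Yc = 0.
  by rewrite /Q' -[Yc in _ *m Yc]trmxK -trmx_mul mulmx_coker trmx0.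
case: (eqVneq (Q *m w) 0) => hQw; last first.
  have [i [j hij]] := mx_neq0 hQw.
  exists (\col_a (Q i a)^*), (\col_b (b == j)%:R); split.
    move=> i1 j1; rewrite dotT_tens.
    have -> : \sum_a (\col_a (Q i a)^*) a 0 * (xs i1 a 0)^* = ((Q *m Xc) i i1)^*.
      rewrite mxE rmorph_sum; apply: eq_bigr => a _; by rewrite !mxE rmorphM.
    by rewrite hQ mxE rmorph0 mul0r.
  rewrite /dotT (_ : \sum_a _ = (Q *m w) i j) //.
  rewrite mxE; apply: eq_bigr => a _.
  rewrite -[RHS]mulr1 -(@sum_delta _ _ (fun b => Q i a * w a b) j) mulr1.
  apply: eq_bigr => b _.
  rewrite /tens !mxE big_ord1 !mxE rmorphM rmorph_nat /= conjCK; ring.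
case: (eqVneq (w *m Q'^T) 0) => hwQ; last first.
  have [i [j hij]] := mx_neq0 hwQ.
  exists (\col_a (a == i)%:R), (\col_b (Q' j b)^*); split.
    move=> i1 j1; rewrite dotT_tens.
    have -> : \sum_b (\col_b (Q' j b)^*) b 0 * (ys j1 b 0)^* = ((Q' *m Yc) j j1)^*.
      rewrite mxE rmorph_sum; apply: eq_bigr => a _; by rewrite !mxE rmorphM.
    by rewrite hQ' mxE rmorph0 mulr0.
  rewrite /dotT (_ : \sum_a _ = (w *m Q'^T) i j) //.
  rewrite (bigD1 i) //= [X in _ + X]big1 ?addr0; last first.
    move=> a ha; apply: big1 => b _.
    by rewrite /tens !mxE big_ord1 !mxE (negbTE ha) mul0r rmorph0 mulr0.
  rewrite mxE; apply: eq_bigr => b _.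
  rewrite /tens !mxE big_ord1 !mxE eqxx rmorphM rmorph1 /= conjCK; ring.
exfalso; move/negP: hw; apply.
have h1 : (w^T <= Xc^T)%MS.
  rewrite submxE; have -> : w^T *m cokermx Xc^T = (Q *m w)^T by rewrite trmx_mul trmxK.
  by rewrite hQw trmx0.
have h2 : (w <= Yc^T)%MS.
  by rewrite submxE -[cokermx _]trmxK hwQ.
have e1 : Xc *m (w^T *m pinvmx Xc^T)^T = w.
  have : (Xc *m (w^T *m pinvmx Xc^T)^T)^T = w^T by rewrite trmx_mul trmxK mulmxKpV.
  by move/(congr1 trmx); rewrite !trmxK.
rewrite -(mulmxKpV h2) -{1}e1 -mulmxA.
have := tens_span_mx _ _ _ _ xs ys ((w^T *m pinvmx Xc^T)^T *m pinvmx Yc^T).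
by rewrite !mulmxA.
Qed.

Theorem lemma5 (C : numClosedFieldType) (m n k : nat)
  (A : {linear 'M[C]_(m, n) -> 'M[C]_(m, n)})
  (xs : 'I_k -> 'cV[C]_m) (ys : 'I_k -> 'cV[C]_n) (y : 'M[C]_(m, n)) :
  selfadj A ->
  y = \sum_(i < k) tens (xs i) (ys i) ->
  dotT (A y) y = 1 ->
  A y \notin tens_span xs ys ->
  exists (u : 'cV[C]_m) (v : 'cV[C]_n) (s : C),
    let x := tens u v in
    let t := sqrtC (1 - s ^+ 2) in
    [/\ dotT x x = 1,
        (forall z, z \in tens_span xs ys -> dotT x z = 0),
        0 < s, s < 1 &
        1 < dotT (A (s *: x + t *: y)) (s *: x + t *: y)].
Proof.
move=> hA _ hAy hnot.
have [u0 [v0 [horth hc]]] := exists_prod _ _ _ _ xs ys (A y) hnot.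
pose x0 := tens u0 v0.
pose c0 := dotT (A y) x0.
pose N := dotT x0 x0.
have hN : 0 < N.
  rewrite lt_def dotT_ge0 andbT; apply/eqP => /dotT_eq0 h0.
  by move: hc; rewrite -/x0 h0 dotT0r eqxx.
pose sN := sqrtC N.
have sNpos : 0 < sN by rewrite sqrtC_gt0.
pose nc : C := `|c0|.
have ncpos : 0 < nc by rewrite normr_gt0.
pose lam := c0 / (nc * sN).
have lamc : lam^* = c0^* / (nc * sN).
  by rewrite rmorphM fmorphV /= [(nc * sN)^*]geC0_conj // mulr_ge0 // ltW.
pose x := tens (lam *: u0) v0.
have ex : x = lam *: x0 by rewrite /x /x0 /tens scalemxAl.
have hcc : c0 * c0^* = nc ^+ 2 by rewrite normCK.
have hN2 : N = sN ^+ 2 by rewrite sqrtCK.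
have ncn0 : nc != 0 by rewrite gt_eqF.
have sNn0 : sN != 0 by rewrite gt_eqF.
have hxx : dotT x x = 1.
  rewrite ex dotTZl dotTZr lamc -/N hN2 /lam.
  move: (c0^*) hcc => cc hcc.
  have -> : c0 / (nc * sN) * (cc / (nc * sN) * sN ^+ 2) = (c0 * cc) / nc ^+ 2.
    by field; rewrite ncn0 sNn0.
  by rewrite hcc divff // expf_neq0.
pose d := dotT (A y) x.
have hd : d = nc / sN.
  rewrite /d ex dotTZr lamc -/c0.
  move: (c0^*) hcc => cc hcc.
  have -> : cc / (nc * sN) * c0 = (c0 * cc) / (nc * sN) by field; rewrite ncn0 sNn0.
  by rewrite hcc; field; rewrite ncn0 sNn0.
have dpos : 0 < d by rewrite hd divr_gt0.
have hxz : forall z, z \in tens_span xs ys -> dotT x z = 0.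
  by move=> z hz; rewrite ex dotTZl (orth_span _ _ _ _ xs ys x0 horth z hz) mulr0.
pose a := dotT (A x) x.
have areal : a \is Num.real.
  by rewrite CrealE /a -dotTC hA.
have hAxy : dotT (A x) y = d.
  by rewrite hA dotTC -/d geC0_conj // ltW.
pose b := 1 - a.
have breal : b \is Num.real by rewrite /b rpredB ?rpred1.
pose nb : C := `|b|.
pose r := nb - b.
have nbge0 : 0 <= nb by rewrite normr_ge0.
have rge0 : 0 <= r by rewrite /r subr_ge0 real_ler_norm.
pose K := nb + d + 1.
have Kpos : 0 < K by rewrite /K addr_gt0 // ltr_wpDl.
pose D := K ^+ 2 + d ^+ 2.
have Dpos : 0 < D by rewrite /D addr_gt0 // exprn_gt0.
have Dn0 : D != 0 by rewrite gt_eqF.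
pose S := 2 * d * K / D.
pose T := (K ^+ 2 - d ^+ 2) / D.
have Tge0 : 0 <= T.
  have -> : T = (nb + 1) * (nb + 2 * d + 1) / D by rewrite /T /K; field.
  rewrite divr_ge0 ?ltW //; apply: mulr_gt0; first exact: ltr_wpDl nbge0 ltr01.
  by apply: ltr_wpDl ltr01; rewrite addr_ge0 // mulr_ge0 // ltW.
have Spos : 0 < S by rewrite /S divr_gt0 // mulr_gt0 // mulr_gt0.
have hT : sqrtC (1 - S ^+ 2) = T.
  have -> : 1 - S ^+ 2 = T ^+ 2 by rewrite /S /T /D; field.
  by rewrite sqrCK.
exists (lam *: u0), v0, S; rewrite /= -/x hT.
split => //.
  rewrite -subr_gt0.
  have -> : 1 - S = (nb + 1) ^+ 2 / D by rewrite /S /D /K; field.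
  by rewrite divr_gt0 // exprn_gt0 // ltr_wpDl.
rewrite linearD !linearZ /= !dotTDl !dotTDr !dotTZl !dotTZr -/a hAxy -/d hAy.
rewrite (geC0_conj (ltW Spos)) (geC0_conj Tge0).
rewrite -subr_gt0.
pose P := nb * (d + 1 + r) + (d + 1) * r + (2 * d + 1).
have Ppos : 0 < P.
  have d0 : 0 <= d by exact: ltW.
  have d1 : 0 <= d + 1 by rewrite addr_ge0.
  apply: ltr_wpDl; first by rewrite addr_ge0 // mulr_ge0 // addr_ge0.
  by apply: ltr_wpDl ltr01; rewrite mulr_ge0.
have -> : S * (S * a) + S * (T * d) + (T * (S * d) + T * (T * 1)) - 1
    = 4 * d ^+ 2 * K * P / D ^+ 2.
  have ea : a = 1 - (nb - r) by rewrite /r /b; ring.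
  rewrite ea /S /T /P /D /K; field.
  exact: Dn0.
by rewrite divr_gt0 ?exprn_gt0 // !mulr_gt0 // exprn_gt0.
Qed.
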